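(* Let $(K,w_K)$ and $(H,w_H)$ be weighted graphs (1-dimensional weighted simplicial complexes) such that $(H,w_H)$ is a subgraph of $(K,w_K)$ and their proper difference $(L,w_L)$ exists, i.e. $L=K$, $w_L=w_K-w_H$ (with $w_H$ extended by $0$ outside $H$) and $\{F\in K:w_L(F)>0\}$ is a simplicial complex. Assume $w_K$ and $w_L$ satisfy the normalizing condition, and let $\lambda_1\le\dots\le\lambda_N$ and $\theta_1\le\dots\le\theta_N$ ($N$ the number of vertices of $K$) be the eigenvalues of the normalized graph Laplacians $\Delta^{up}_0(K)=\mathcal{L}^{up}_0(K,w_K)$ and $\Delta^{up}_0(L)=\mathcal{L}^{up}_0(L,w_L)$, respectively. With the conventions $\lambda_j=0$ for $1-\dim C^0(H,\mathbb{R})+\dim H^0(H,\mathbb{R})\le j\le 0$ and $\lambda_j=2$ for $N+1\le j\le N+\dim C^0(H,\mathbb{R})$, for all $k=1,\dots,N$: $$\lambda_{k-\dim C^0(H,\mathbb{R})+\dim H^0(H,\mathbb{R})}\le\theta_k\le\lambda_{k+\dim C^0(H,\mathbb{R})}.$$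
   Context: For a graph $G$ (vertices $S_0$, edges $S_1$) with weight function $w\ge0$ on vertices and edges, $C^0(G,\mathbb{R})$ is the space of functions on vertices with inner product $(f,g)=\sum_v w(v)f(v)g(v)$, $C^1$ the space of functions on oriented edges with $(\bar f,\bar g)=\sum_e w(e)\bar f(e)\bar g(e)$, $(\delta_0 f)([u,v])=f(v)-f(u)$, and the formal adjoint $(\delta_0^*\bar f)(v)=\sum_{e\ni v}\frac{w(e)}{w(v)}\mathrm{sgn}(v,\partial e)\bar f(e)$ if $w(v)\neq0$ and $0$ if $w(v)=0$, where $\mathrm{sgn}(v,\partial[u,v])=1$, $\mathrm{sgn}(u,\partial[u,v])=-1$. $\mathcal{L}^{up}_0(G,w)=\delta_0^*\delta_0$. A subgraph $(H,w_H)$ of $(K,w_K)$ is a subcomplex with $w_H\le w_K$ on its faces. The normalizing condition: $w(v)=\sum_{e\ni v}w(e)$ for every vertex $v$ that lies on at least one edge. $\dim C^0(H,\mathbb{R})$ is the number of vertices of $H$ and $\dim H^0(H,\mathbb{R})$ its number of connected components. *)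

(* Defs.v *)
From HB Require Import structures.
From mathcomp Require Import all_boot all_order all_algebra.
From mathcomp Require Import reals.
Set Implicit Arguments. Unset Strict Implicit. Unset Printing Implicit Defensive.
Import Order.TTheory GRing.Theory Num.Theory.
Local Open Scope ring_scope.

(* An (oriented) edge [u,v] is a
   pair (u,v) with u < v; an edge set is E : {set 'I_n * 'I_n}. *)

Section Graph.
Variables (R : realType) (n : nat).

Definition on_edge (v : 'I_n) (e : 'I_n * 'I_n) : bool := (v == e.1) || (v == e.2).

Definition esgn (v : 'I_n) (e : 'I_n * 'I_n) : R := if v == e.2 then 1 else -1.

Definition is_edge_set (E : {set 'I_n * 'I_n}) : Prop :=
  forall e, e \in E -> (e.1 < e.2)%N.

Definition delta0 (f : 'I_n -> R) (e : 'I_n * 'I_n) : R := f e.2 - f e.1.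

Definition delta0_adj (E : {set 'I_n * 'I_n}) (wV : 'I_n -> R)
  (wE : 'I_n * 'I_n -> R) (g : 'I_n * 'I_n -> R) (v : 'I_n) : R :=
  if wV v == 0 then 0
  else \sum_(e in E | on_edge v e) wE e / wV v * esgn v e * g e.

Definition Lup0 E wV wE (f : 'I_n -> R) : 'I_n -> R :=
  delta0_adj E wV wE (delta0 f).

Definition Lup0_mx E wV wE : 'M[R]_n :=
  \matrix_(i, j) Lup0 E wV wE (fun x => (x == j)%:R) i.

Definition nonneg_weights (E : {set 'I_n * 'I_n}) (wV : 'I_n -> R)
  (wE : 'I_n * 'I_n -> R) : Prop :=
  (forall v, 0 <= wV v) /\ (forall e, e \in E -> 0 <= wE e).

Definition normalizing (E : {set 'I_n * 'I_n}) (wV : 'I_n -> R)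
  (wE : 'I_n * 'I_n -> R) : Prop :=
  forall v, (exists2 e, e \in E & on_edge v e) ->
    wV v = \sum_(e in E | on_edge v e) wE e.

Definition subcomplex (E : {set 'I_n * 'I_n}) (VH : {set 'I_n})
  (EH : {set 'I_n * 'I_n}) : Prop :=
  EH \subset E /\ (forall e, e \in EH -> (e.1 \in VH) && (e.2 \in VH)).

Definition adj (EH : {set 'I_n * 'I_n}) : rel 'I_n :=
  fun u v => ((u, v) \in EH) || ((v, u) \in EH).

(* number of connected components of the graph (VH, EH) = dim H^0 *)
Definition n_components (VH : {set 'I_n}) (EH : {set 'I_n * 'I_n}) : nat :=
  #|[set [set v in VH | connect (adj EH) u v] | u in VH]|.

Definition eigenvalues_sorted (A : 'M[R]_n) (lam : 'I_n -> R) : Prop :=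
  char_poly A = \prod_(i < n) ('X - (lam i)%:P) /\
  (forall i j : 'I_n, (i <= j)%N -> lam i <= lam j).

(* extension lam_j (1-based index j : int) by 0 for j <= 0 and 2 for j > n *)
Definition ext_eig (lam : 'I_n -> R) (j : int) : R :=
  match j with
  | Posz m => if m is m'.+1 then
                (if insub m' : option 'I_n is Some i then lam i else 2)
              else 0
  | Negz _ => 0
  end.

End Graph.

(* Main.v *)
Require Import Defs.
From HB Require Import structures.
From mathcomp Require Import all_boot all_order all_algebra.
From mathcomp Require Import reals.
From mathcomp Require Import complex ring lra zify.
Import Order.TTheory GRing.Theory Num.Theory.
Local Open Scope ring_scope.

Module Helpers.
Set Implicit Arguments. Unset Strict Implicit. Unset Printing Implicit Defensive.
Local Open Scope ring_scope.

Lemma char_poly_simil (F : fieldType) n (P Q A : 'M[F]_n) :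
  P *m Q = 1%:M -> char_poly (P *m A *m Q) = char_poly A.
Proof.
move=> PQ.
have H : char_poly_mx (P *m A *m Q) =
   map_mx polyC P *m char_poly_mx A *m map_mx polyC Q.
  rewrite /char_poly_mx mulmxBr mulmxBl -!map_mxM.
  rewrite mul_mx_scalar -scalemxAl -map_mxM PQ map_mx1.
  by rewrite scalemx1.
rewrite /char_poly H !det_mulmx mulrC mulrA -det_mulmx -map_mxM.
by rewrite (mulmx1C PQ) map_mx1 det1 mul1r.
Qed.

Local Open Scope sesquilinear_scope.



Section Key.
Variables (R : realType) (n : nat).
Local Notation C := (R[i]).
Local Notation rc := (real_complex R).

Definition qfc (A : 'M[C]_n) (f : 'rV[C]_n) : C := (f *m A *m f ^t*) 0 0.

Lemma qfc_mul (B A : 'M[C]_n) f : qfc (B *m A *m B ^t*) f = qfc A (f *m B).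
Proof.
by rewrite /qfc trmx_mul map_mxM !mulmxA.
Qed.

Lemma qfc_diag (v : 'rV[C]_n) f :
  qfc (diag_mx v) f = \sum_j v 0 j * (f 0 j * (f 0 j)^*).
Proof.
rewrite /qfc mul_mx_diag !mxE; apply: eq_bigr => j _.
by rewrite !mxE [_ * v 0 j]mulrC mulrA.
Qed.

Lemma qfc1 f : qfc 1%:M f = \sum_j (f 0 j * (f 0 j)^*).
Proof.
rewrite -diag_const_mx qfc_diag; apply: eq_bigr => j _.
by rewrite mxE mul1r.
Qed.

Definition selmx (A : {set 'I_n}) : 'M[C]_(#|A|, n) :=
  \matrix_(k, j) ((enum_val k == j)%:R).

Lemma selmx_rank (A : {set 'I_n}) : (#|A| <= \rank (selmx A))%N.
Proof.
have H : selmx A *m (selmx A)^T = 1%:M.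
  apply/matrixP => k l; rewrite !mxE.
  rewrite (bigD1 (enum_val k)) //= big1 => [|j /negPf jk]; last first.
    by rewrite !mxE eq_sym jk mul0r.
  rewrite !mxE eqxx mul1r addr0.
  case: (eqVneq k l) => [->|kl]; first by rewrite eqxx.
  by rewrite (inj_eq enum_val_inj) eq_sym (negPf kl).
have := mxrankM_maxl (selmx A) (selmx A)^T.
by rewrite H mxrank1.
Qed.

Lemma selmx_supp (A : {set 'I_n}) (c : 'rV_#|A|) j : j \notin A -> (c *m selmx A) 0 j = 0.
Proof.
move=> jA; rewrite !mxE big1 // => k _; rewrite !mxE.
case: eqP => [ej|]; last by rewrite mulr0.
by move: jA; rewrite -ej enum_valP.
Qed.

End Key.


Lemma card_set_count n (P : pred 'I_n) : #|[set i | P i]| = count P (enum 'I_n).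
Proof. by rewrite cardsE cardE /enum_mem size_filter /= filter_predT. Qed.

Lemma card_set_map n (T : eqType) (f : 'I_n -> T) (Q : pred T) :
  #|[set i | Q (f i)]| = count Q [seq f i | i <- enum 'I_n].
Proof. by rewrite card_set_count count_map. Qed.

Section Key2.
Variables (R : realType) (n : nat).
Local Notation C := (R[i]).
Local Notation rc := (real_complex R).

Lemma rc_conj (x : R) : (rc x)^* = rc x.
Proof. exact: conjc_real. Qed.

Lemma rc_diag_adj (v : 'rV[R]_n) :
  (map_mx rc (diag_mx v)) ^t* = map_mx rc (diag_mx v).
Proof.
apply/matrixP => i j; rewrite !mxE.
rewrite rc_conj eq_sym; case: eqP => [->//|_]; by rewrite !mulr0n.
Qed.

Lemma key (S : 'M[R]_n) (d : 'I_n -> R) (lam : 'I_n -> R) :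
  S^T = S -> (forall i, 0 < d i) ->
  char_poly (\matrix_(i, j) (S i j / d i)) = \prod_(i < n) ('X - (lam i)%:P) ->
  forall t : R,
  (exists m (U : 'M[C]_(m, n)), (#|[set i | (lam i <= t)%R]| <= \rank U)%N /\
      forall f, (f <= U)%MS ->
        qfc (map_mx rc S) f <= rc t * qfc (map_mx rc (diag_mx (\row_i d i))) f) /\
  (exists m (V : 'M[C]_(m, n)), (#|[set i | (t <= lam i)%R]| <= \rank V)%N /\
      forall f, (f <= V)%MS ->
        rc t * qfc (map_mx rc (diag_mx (\row_i d i))) f <= qfc (map_mx rc S) f).
Proof.
move=> Ssym dpos charM t.
pose h i := Num.sqrt (d i).
have hpos i : 0 < h i by rewrite sqrtr_gt0.
have hh i : h i * h i = d i by rewrite -expr2 sqr_sqrtr // ltW.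
have hn0 i : h i != 0 by rewrite gt_eqF.
pose T := \matrix_(i, j) (S i j / (h i * h j)).
pose Dh := diag_mx (\row_i h i).
pose Dhi := diag_mx (\row_i (h i)^-1).
have DhDhi : Dh *m Dhi = 1%:M.
  apply/matrixP => i j; rewrite mul_diag_mx !mxE.
  by case: eqP => _; rewrite ?mulr1n ?mulr0n ?mulr0 // divff.
have DhiDh : Dhi *m Dh = 1%:M by apply: mulmx1C.
have TM : Dh *m (\matrix_(i, j) (S i j / d i)) *m Dhi = T.
  apply/matrixP => i j; rewrite mul_mx_diag mul_diag_mx !mxE -hh.
  by field; rewrite hn0 hn0.
have ST : S = Dh *m T *m Dh.
  apply/matrixP => i j; rewrite mul_mx_diag mul_diag_mx !mxE.
  by field; rewrite hn0 hn0.
have Dd : diag_mx (\row_i d i) = Dh *m Dh.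
  apply/matrixP => i j; rewrite mul_diag_mx !mxE.
  by case: eqP => [->|_]; rewrite ?mulr1n ?mulr0n ?mulr0 ?hh.
have charT : char_poly T = \prod_(i < n) ('X - (lam i)%:P).
  by rewrite -TM char_poly_simil.
pose Tc := map_mx rc T.
have Tc_adj : Tc ^t* = Tc.
  apply/matrixP => i j; rewrite !mxE rc_conj.
  have Sij : S j i = S i j by rewrite -{1}Ssym mxE.
  by rewrite Sij [h j * _]mulrC.
have Tn : Tc \is normalmx by apply/normalmxP; rewrite Tc_adj.
pose P := spectralmx Tc; pose sp := spectral_diag Tc.
have /orthomx_spectralP TcE := Tn.
have Pu : P \is unitarymx := spectral_unitarymx Tc.
have PPt : P *m P ^t* = 1%:M by apply/unitarymxP.
have invP : invmx P = P ^t* := invmx_unitary Pu.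
have Punit : P \in unitmx := unitarymx_unit Pu.
have charTc : char_poly Tc = \prod_(i < n) ('X - (rc (lam i))%:P).
  rewrite -map_char_poly charT rmorph_prod; apply: eq_bigr => i _.
  by rewrite /= map_polyXsubC.
have charD : char_poly Tc = \prod_(i < n) ('X - (sp 0 i)%:P).
  rewrite TcE char_poly_simil ?mulVmx // char_poly_trig ?diag_mx_is_trig //.
  by apply: eq_bigr => i _; rewrite mxE eqxx mulr1n.
have perm : perm_eq [seq sp 0 i | i <- enum 'I_n] [seq rc (lam i) | i <- enum 'I_n].
  apply: prod_XsubC_eq; rewrite !big_map -enumT.
  rewrite !big_enum /=. by rewrite -charD -charTc.
have cnt (Q : pred C) (Ql : pred R) : (forall x, Q (rc x) = Ql x) ->
    #|[set i | Ql (lam i)]| = #|[set i | Q (sp 0 i)]|.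
  move=> QQ; rewrite (card_set_map lam Ql) (card_set_map (fun i => sp 0 i) Q) (permP perm) !count_map.
  by apply: eq_count => x /=; rewrite QQ.
pose Dhc := map_mx rc Dh; pose Dhic := map_mx rc Dhi.
have DhicDhc : Dhic *m Dhc = 1%:M by rewrite -map_mxM DhiDh map_mx1.
have Dhic_unit : Dhic \in unitmx by case: (mulmx1_unit DhicDhc).
have Dhc_adj : Dhc ^t* = Dhc by apply: rc_diag_adj.
have Sc : map_mx rc S = Dhc *m Tc *m Dhc ^t* by rewrite Dhc_adj ST !map_mxM.
have Dc : map_mx rc (diag_mx (\row_i d i)) = Dhc *m 1%:M *m Dhc ^t*.
  by rewrite Dhc_adj mulmx1 Dd map_mxM.
have PTP : P *m Tc *m P ^t* = diag_mx sp.
  by rewrite TcE invP !mulmxA PPt mul1mx -mulmxA PPt mulmx1.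
have P1P : P *m 1%:M *m P ^t* = 1%:M by rewrite mulmx1 PPt.
have space (I : {set 'I_n}) :
   (#|I| <= \rank (@selmx R n I *m P *m Dhic))%N /\
   forall f, (f <= @selmx R n I *m P *m Dhic)%MS -> exists c' : 'rV[C]_n,
     [/\ forall j, j \notin I -> c' 0 j = 0,
         qfc (map_mx rc S) f = \sum_j sp 0 j * (c' 0 j * (c' 0 j)^*) &
         qfc (map_mx rc (diag_mx (\row_i d i))) f = \sum_j (c' 0 j * (c' 0 j)^*)].
  split.
    rewrite -mulmxA mxrankMfree ?selmx_rank // row_free_unit unitmx_mul Punit.
    exact: Dhic_unit.
  move=> f /submxP [c ->]; exists (c *m @selmx R n I); split.
  - by move=> j jI; rewrite selmx_supp.
  - rewrite Sc qfc_mul !mulmxA -[_ *m Dhic *m Dhc]mulmxA DhicDhc mulmx1.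
    by rewrite -qfc_diag -PTP qfc_mul.
  - rewrite Dc qfc_mul !mulmxA -[_ *m Dhic *m Dhc]mulmxA DhicDhc mulmx1.
    by rewrite -qfc1 -[in RHS]P1P qfc_mul.
split.
  have [rk Hf] := space [set i | sp 0 i <= rc t].
  exists _, (@selmx R n [set i | sp 0 i <= rc t] *m P *m Dhic); split.
    by rewrite (cnt (fun z => z <= rc t) (fun z => z <= t)) // => x; rewrite lecR.
  move=> f /Hf [c' [c0 -> ->]]; rewrite mulr_sumr; apply: ler_sum => j _.
  case: (boolP (j \in [set i | sp 0 i <= rc t])) => [|jI].
    by rewrite inE => jI; apply: ler_wpM2r => //; exact: mul_conjC_ge0.
  by rewrite c0 // mul0r !mulr0.
have [rk Hf] := space [set i | rc t <= sp 0 i].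
exists _, (@selmx R n [set i | rc t <= sp 0 i] *m P *m Dhic); split.
  by rewrite (cnt (fun z => rc t <= z) (fun z => t <= z)) // => x; rewrite lecR.
move=> f /Hf [c' [c0 -> ->]]; rewrite mulr_sumr; apply: ler_sum => j _.
case: (boolP (j \in [set i | rc t <= sp 0 i])) => [|jI].
  by rewrite inE => jI; apply: ler_wpM2r => //; exact: mul_conjC_ge0.
by rewrite c0 // mul0r !mulr0.
Qed.
End Key2.


Section Graph1.
Variables (R : realType) (n : nat).
Local Notation C := (R[i]).
Local Notation rc := (real_complex R).

Definition bvec (e : 'I_n * 'I_n) (x : 'I_n) : R := (e.2 == x)%:R - (e.1 == x)%:R.

Definition Smx (E : {set 'I_n * 'I_n}) (wE : 'I_n * 'I_n -> R) : 'M[R]_n :=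
  \matrix_(i, j) \sum_(e in E) wE e * (bvec e i * bvec e j).

Lemma Smx_sym E wE : (Smx E wE)^T = Smx E wE.
Proof.
apply/matrixP => i j; rewrite !mxE; apply: eq_bigr => e _; by rewrite [bvec e j * _]mulrC.
Qed.

Lemma esgn_bvec (E : {set 'I_n * 'I_n}) e i : is_edge_set E -> e \in E ->
  on_edge i e -> esgn R i e = bvec e i.
Proof.
move=> hE eE; have lt := hE e eE; rewrite /on_edge /esgn /bvec.
have ne : (e.1 == e.2) = false by apply/negbTE; rewrite -val_eqE /= ltn_eqF.
have ne' : (e.2 == e.1) = false by rewrite eq_sym.
case/orP => /eqP ->; rewrite ?ne ?ne' eqxx /=; by rewrite ?subr0 ?sub0r.
Qed.

Lemma bvec_off e i : ~~ on_edge i e -> bvec e i = 0.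
Proof.
rewrite /on_edge /bvec negb_or => /andP[h1 h2].
by rewrite eq_sym (negPf h2) eq_sym (negPf h1) subrr.
Qed.

Lemma Lup0_mxE E wV wE (dd : 'I_n -> R) :
  is_edge_set E -> nonneg_weights E wV wE -> normalizing E wV wE ->
  (forall i, wV i != 0 -> dd i = wV i) ->
  Lup0_mx E wV wE = \matrix_(i, j) (Smx E wE i j / dd i).
Proof.
move=> hE [hV hEw] hN hdd; apply/matrixP => i j.
rewrite !mxE /Lup0 /delta0_adj.
case: (eqVneq (wV i) 0) => [wi0|wi0].
  rewrite big1 ?mul0r // => e eE.
  case: (boolP (on_edge i e)) => [ie|ie]; last by rewrite bvec_off // mul0r mulr0.
  have := hN i (ex_intro2 _ _ e eE ie); rewrite wi0 => /esym /eqP.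
  move=> /eqP /psumr_eq0P H.
  rewrite H ?mul0r ?eE ?ie //.
  by move=> x /andP[xE _]; apply: hEw.
rewrite hdd // [X in _ = X / _](bigID (on_edge i)) /= [X in _ = (_ + X) / _]big1 ?addr0; last first.
  by move=> e /andP[_ ie]; rewrite bvec_off // mul0r mulr0.
rewrite mulr_suml; apply: eq_bigr => e /andP[eE ie].
rewrite (esgn_bvec hE eE ie) /delta0 /bvec; by field.
Qed.

Lemma qfcE (A : 'M[C]_n) f : qfc A f = \sum_i \sum_j f 0 i * A i j * (f 0 j)^*.
Proof.
rewrite /qfc mxE exchange_big /=; apply: eq_bigr => j _.
by rewrite !mxE big_distrl /=; apply: eq_bigr => i _.
Qed.

Lemma sum_pickl (F : 'I_n -> C) a : \sum_i F i * (a == i)%:R = F a.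
Proof.
rewrite (bigD1 a) //= eqxx mulr1 big1 ?addr0 // => i /negPf.
by rewrite eq_sym => ->; rewrite mulr0.
Qed.

Lemma sum_pickr (F : 'I_n -> C) a : \sum_i (a == i)%:R * F i = F a.
Proof. rewrite -[RHS]sum_pickl; apply: eq_bigr => i _; by rewrite mulrC. Qed.

Lemma rc_bvec e i : rc (bvec e i) = (e.2 == i)%:R - (e.1 == i)%:R.
Proof. by rewrite /bvec rmorphB !rmorph_nat. Qed.

Lemma qf_Smx E wE f : qfc (map_mx rc (Smx E wE)) f =
  \sum_(e in E) rc (wE e) * ((f 0 e.2 - f 0 e.1) * (f 0 e.2 - f 0 e.1)^*).
Proof.
rewrite qfcE.
transitivity (\sum_(e in E) \sum_i \sum_j
   f 0 i * (rc (wE e) * (rc (bvec e i) * rc (bvec e j))) * (f 0 j)^*).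
  rewrite [RHS]exchange_big; apply: eq_bigr => i _.
  rewrite [RHS]exchange_big; apply: eq_bigr => j _.
  rewrite !mxE rmorph_sum mulr_sumr mulr_suml; apply: eq_bigr => e _.
  by rewrite !rmorphM.
apply: eq_bigr => e eE.
have s1 : \sum_i f 0 i * rc (bvec e i) = f 0 e.2 - f 0 e.1.
  under eq_bigr do rewrite rc_bvec mulrBr.
  by rewrite sumrB !sum_pickl.
have s2 : \sum_j rc (bvec e j) * (f 0 j)^* = (f 0 e.2 - f 0 e.1)^*.
  under eq_bigr do rewrite rc_bvec mulrBl.
  by rewrite sumrB !sum_pickr rmorphB.
rewrite -s2 -s1 big_distrl mulr_sumr; apply: eq_bigr => i _.
rewrite /= !mulr_sumr; apply: eq_bigr => j _; ring.
Qed.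

Lemma qf_diag (d : 'I_n -> R) f :
  qfc (map_mx rc (diag_mx (\row_i d i))) f = \sum_j rc (d j) * (f 0 j * (f 0 j)^*).
Proof.
rewrite map_diag_mx qfc_diag; apply: eq_bigr => j _; by rewrite !mxE.
Qed.

Lemma qf_S_ge0 (E : {set 'I_n * 'I_n}) (wE : 'I_n * 'I_n -> R) f : (forall e, e \in E -> 0 <= wE e) ->
  0 <= qfc (map_mx rc (Smx E wE)) f.
Proof.
move=> hw; rewrite qf_Smx; apply: sumr_ge0 => e eE.
by apply: mulr_ge0; [rewrite ler0c; apply: hw | apply: mul_conjC_ge0].
Qed.

Lemma sum_two (G : 'I_n -> C) x y : x != y ->
  \sum_v (if (v == x) || (v == y) then G v else 0) = G x + G y.
Proof.
move=> xy; rewrite (bigD1 x) //= (bigD1 y) /=; last by rewrite eq_sym. rewrite !eqxx orbT /= big1 ?addr0 //.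
by move=> v /andP[/negPf -> /negPf ->].
Qed.

Lemma sum_le_dd (E : {set 'I_n * 'I_n}) (wV : 'I_n -> R) (wE : 'I_n * 'I_n -> R) (dd : 'I_n -> R) v :
  nonneg_weights E wV wE -> normalizing E wV wE ->
  (forall i, 0 < dd i) -> (forall i, wV i != 0 -> dd i = wV i) ->
  \sum_(e in E | on_edge v e) wE e <= dd v.
Proof.
move=> [hV hw] hN hpos hdd.
case: (boolP [exists e, (e \in E) && on_edge v e]).
  move/existsP => [e /andP[eE ve]]; rewrite -(hN v (ex_intro2 _ _ e eE ve)).
  case: (eqVneq (wV v) 0) => [->|nz]; first exact: ltW.
  by rewrite hdd.
move=> H; rewrite big1; first exact: ltW.
move=> e /andP[eE ve]; exfalso; apply: (negP H); apply/existsP; exists e.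
by rewrite eE ve.
Qed.

Lemma qf_S_le2 (E : {set 'I_n * 'I_n}) (wV : 'I_n -> R) (wE : 'I_n * 'I_n -> R) (dd : 'I_n -> R) f :
  is_edge_set E -> nonneg_weights E wV wE -> normalizing E wV wE ->
  (forall i, 0 < dd i) -> (forall i, wV i != 0 -> dd i = wV i) ->
  qfc (map_mx rc (Smx E wE)) f <= 2 * qfc (map_mx rc (diag_mx (\row_i dd i))) f.
Proof.
move=> hE [hV hw] hN hpos hdd.
pose a v := f 0 v * (f 0 v)^*.
have a0 v : 0 <= a v by apply: mul_conjC_ge0.
rewrite qf_Smx qf_diag.
apply: (@le_trans _ _ (\sum_(e in E) rc (wE e) * (2 * (a e.2 + a e.1)))).
  apply: ler_sum => e eE; apply: ler_wpM2l; first by rewrite ler0c hw.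
  rewrite -subr_ge0.
  have -> : 2 * (a e.2 + a e.1) - (f 0 e.2 - f 0 e.1) * (f 0 e.2 - f 0 e.1)^* =
     (f 0 e.2 + f 0 e.1) * (f 0 e.2 + f 0 e.1)^*.
    by rewrite /a rmorphB rmorphD /=; ring.
  exact: mul_conjC_ge0.
have -> : \sum_(e in E) rc (wE e) * (2 * (a e.2 + a e.1)) =
    2 * \sum_v a v * rc (\sum_(e in E | on_edge v e) wE e).
  rewrite [RHS]mulr_sumr.
  under [RHS]eq_bigr do rewrite rmorph_sum !mulr_sumr big_mkcond /=.
  rewrite [RHS]exchange_big /= [LHS]big_mkcond /=; apply: eq_bigr => e _.
  case: (boolP (e \in E)) => eE /=; last by rewrite big1 // => v _; case: ifP.
  have ne : e.1 != e.2 by rewrite -val_eqE /= ltn_eqF // hE.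
  rewrite /on_edge (sum_two (fun v => 2 * (a v * rc (wE e))) ne) /=; ring.
apply: ler_wpM2l => //; apply: ler_sum => v _.
rewrite [rc (dd v) * _]mulrC; apply: ler_wpM2l; first by apply: a0.
by rewrite lecR; apply: (sum_le_dd _ (conj hV hw) hN hpos hdd).
Qed.

End Graph1.


Lemma exists_nz (F : fieldType) m n (A : 'M[F]_(m, n)) :
  (0 < \rank A)%N -> exists f : 'rV_n, f != 0 /\ (f <= A)%MS.
Proof.
move=> rA.
have : A != 0 by rewrite -mxrank_eq0 -lt0n.
case: (pickP (fun i => row i A != 0)) => [i ri _|H].
  by exists (row i A); split => //; apply: row_sub.
move=> /negP; case; apply/eqP/matrixP => i j.
have := H i => /negbFE /eqP /matrixP /(_ 0 j); by rewrite !mxE.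
Qed.

Lemma three_cap (F : fieldType) n m1 m2 m3 (A : 'M[F]_(m1, n)) (B : 'M_(m2, n))
  (D : 'M_(m3, n)) :
  (2 * n < \rank A + \rank B + \rank D)%N ->
  exists f : 'rV_n, [/\ f != 0, (f <= A)%MS, (f <= B)%MS & (f <= D)%MS].
Proof.
move=> H.
have h1 := mxrank_sum_cap A B; have h1' := rank_leq_col (A + B)%MS.
have h2 := mxrank_sum_cap (A :&: B)%MS D; have h2' := rank_leq_col ((A :&: B) + D)%MS.
have [f [fn0 fX]] := @exists_nz _ _ _ (A :&: B :&: D)%MS ltac:(lia).
exists f; split => //.
- exact: submx_trans fX (submx_trans (capmxSl _ _) (capmxSl _ _)).
- exact: submx_trans fX (submx_trans (capmxSl _ _) (capmxSr _ _)).
- exact: submx_trans fX (capmxSr _ _).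
Qed.

Section Blocks.
Variables (R : realType) (n : nat).
Local Notation C := (R[i]).
Variables (VH : {set 'I_n}) (EH : {set 'I_n * 'I_n}).
Hypothesis EHV : forall e, e \in EH -> (e.1 \in VH) && (e.2 \in VH).

Definition comps := [set [set v in VH | connect (adj EH) u v] | u in VH].
Definition singles := [set [set v] | v in ~: VH].
Definition blocks := singles :|: comps.

Lemma adj_sym : connect_sym (adj EH).
Proof. by apply: sym_connect_sym => x y; rewrite /adj orbC. Qed.

Lemma comps_sub B x : B \in comps -> x \in B -> x \in VH.
Proof. by move=> /imsetP [u _ ->]; rewrite inE => /andP[]. Qed.

Lemma blocks_disj (B1 B2 : {set 'I_n}) j : B1 \in blocks -> B2 \in blocks ->
  j \in B1 -> j \in B2 -> B1 = B2.
Proof.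
have cC : forall B1 B2, B1 \in comps -> B2 \in comps -> j \in B1 -> j \in B2 -> B1 = B2.
  move=> C1 C2 /imsetP [u _ ->] /imsetP [u' _ ->]; rewrite !inE.
  move=> /andP[jV uj] /andP[_ u'j]; apply/setP => x; rewrite !inE.
  by rewrite (same_connect adj_sym uj) (same_connect adj_sym u'j).
have sC : forall B1 B2, B1 \in singles -> B2 \in comps -> j \in B1 -> j \in B2 -> False.
  move=> C1 C2 /imsetP [v vV ->] C2c; rewrite inE => /eqP -> /(comps_sub C2c).
  by move: vV; rewrite inE => /negP.
case/setUP => [h1|h1]; case/setUP => [h2|h2] j1 j2.
- move: h1 h2 j1 j2 => /imsetP [v _ ->] /imsetP [v' _ ->].
  by rewrite !inE => /eqP -> /eqP ->.
- by case: (sC _ _ h1 h2 j1 j2).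
- by case: (sC _ _ h2 h1 j2 j1).
- exact: cC.
Qed.

Lemma blocks_nz B : B \in blocks -> exists x, x \in B.
Proof.
case/setUP => /imsetP [v vV ->]; exists v; rewrite !inE ?eqxx //.
by rewrite vV connect0.
Qed.

Lemma card_blocks : #|blocks| = ((n - #|VH|) + n_components VH EH)%N.
Proof.
rewrite /blocks cardsU.
have -> : singles :&: comps = set0.
  apply/setP => B; rewrite !inE; apply/negP => /andP[h1 h2].
  move: h1 => /imsetP [v vV eB]; have : v \in B by rewrite eB inE.
  move/(comps_sub h2); by move: vV; rewrite inE => /negP.
rewrite cards0 subn0 /singles card_imset; last exact: set1_inj.
have := cardsC VH; rewrite card_ord => H.
have -> : (n - #|VH|)%N = #|~: VH| by lia.
by [].
Qed.

Lemma comps_le : (n_components VH EH <= #|VH|)%N.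
Proof. exact: leq_imset_card. Qed.

Local Notation ev k := (enum_val (A := blocks) k : {set 'I_n}).

Definition Bmx : 'M[C]_(#|blocks|, n) :=
  \matrix_(k < #|blocks|, j < n) ((j \in (enum_val (A := blocks) k : {set 'I_n}))%:R).

Lemma Bmx_rank : (#|blocks| <= \rank Bmx)%N.
Proof.
pose D := diag_mx (\row_(k < #|blocks|) (#|ev k|%:R : C)^-1).
have nz (k : 'I_#|blocks|) : (#|ev k|%:R : C) != 0.
  have [x xB] := blocks_nz (enum_valP (A := blocks) k).
  by rewrite pnatr_eq0 -lt0n; apply/card_gt0P; exists x.
have H : Bmx *m (Bmx^T *m D) = 1%:M.
  apply/matrixP => k l; rewrite mulmxA mul_mx_diag !mxE.
  have -> : \sum_j Bmx k j * Bmx^T j l = (k == l)%:R * #|ev k|%:R.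
    case: (eqVneq k l) => [<-|kl].
      rewrite mul1r -[#|ev k|]sum1_card natr_sum [RHS]big_mkcond /=; apply: eq_bigr => j _.
      by rewrite !mxE; case: (j \in ev k); rewrite ?mulr1 ?mulr0.
    rewrite /= mul0r big1 // => j _; rewrite !mxE.
    case: (boolP (j \in ev k)) => jk; last by rewrite mul0r.
    case: (boolP (j \in ev l)) => jl; last by rewrite mulr0.
    have := blocks_disj (enum_valP (A := blocks) k) (enum_valP (A := blocks) l) jk jl => /enum_val_inj kl'.
    by rewrite kl' eqxx in kl.
  case: (eqVneq k l) => [<-|kl]; last by rewrite !mul0r.
  by rewrite mul1r mulfV.
have := mxrankM_maxl Bmx (Bmx^T *m D); by rewrite H mxrank1.
Qed.

Lemma Bmx_edge (f : 'rV[C]_n) : (f <= Bmx)%MS ->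
  forall e, e \in EH -> f 0 e.1 = f 0 e.2.
Proof.
move=> /submxP [c ->] e eH; rewrite !mxE; apply: eq_bigr => k _; congr (_ * _).
rewrite !mxE; congr (_%:R).
have /andP [e1V e2V] := EHV eH.
have ce : connect (adj EH) e.1 e.2.
  by apply: connect1; rewrite /adj -surjective_pairing eH.
case/setUP: (enum_valP (A := blocks) k) => /imsetP [v vV ->]; rewrite !inE.
  by move: vV; rewrite inE; case: eqP => [<-|_]; rewrite ?e1V //; case: eqP => [<-|_]; rewrite ?e2V.
by rewrite e1V e2V /= (same_connect_r adj_sym ce).
Qed.

End Blocks.


Section Misc.
Variables (R : realType) (n : nat).
Local Notation C := (R[i]).
Local Notation rc := (real_complex R).

Lemma cnt_le (lam : 'I_n -> R) (hs : forall i j : 'I_n, (i <= j)%N -> lam i <= lam j)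
  (k : 'I_n) : (k.+1 <= #|[set i | (lam i <= lam k)%R]|)%N.
Proof.
have inj : injective (widen_ord (ltn_ord k)).
  by move=> a b /(congr1 val) /= /val_inj.
have -> : k.+1 = #|[set widen_ord (ltn_ord k) i | i : 'I_k.+1]|.
  by rewrite card_imset // card_ord.
apply: subset_leq_card; apply/subsetP => x /imsetP [i _ ->]; rewrite inE.
by apply: hs => /=; rewrite -ltnS (ltn_ord i).
Qed.

Lemma cnt_ge (lam : 'I_n -> R) (hs : forall i j : 'I_n, (i <= j)%N -> lam i <= lam j)
  (k : 'I_n) : (n - k <= #|[set i | (lam k <= lam i)%R]|)%N.
Proof.
pose g (i : 'I_(n - k)) : 'I_n := insubd k (nat_of_ord k + nat_of_ord i)%N.
have gv i : val (g i) = (k + i)%N.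
  rewrite val_insubd; have := ltn_ord i; case: ifP => //; lia.
have inj : injective g.
  by move=> a b /(congr1 val); rewrite !gv => /addnI /val_inj.
have -> : (n - k)%N = #|[set g i | i : 'I_(n - k)]|.
  by rewrite card_imset // card_ord.
apply: subset_leq_card; apply/subsetP => x /imsetP [i _ ->]; rewrite inE.
by apply: hs; rewrite gv leq_addr.
Qed.

Lemma ext_eig_le0 (lam : 'I_n -> R) (j : int) : (j <= 0)%R -> ext_eig lam j = 0.
Proof. by case: j => [[|m]|m] //=. Qed.

Lemma ext_eig_in (lam : 'I_n -> R) m (H : (m < n)%N) :
  ext_eig lam (m.+1)%:Z = lam (Ordinal H).
Proof.
rewrite /ext_eig; case: insubP => [i _ iv|]; last by rewrite H.
by congr lam; apply: val_inj.
Qed.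

Lemma ext_eig_out (lam : 'I_n -> R) m : (n <= m)%N -> ext_eig lam (m.+1)%:Z = 2.
Proof. by move=> H; rewrite /ext_eig insubN // -leqNgt. Qed.

Lemma qf_diag_gt0 (d : 'I_n -> R) (f : 'rV[C]_n) : (forall i, 0 < d i) -> f != 0 ->
  0 < qfc (map_mx rc (diag_mx (\row_i d i))) f.
Proof.
move=> dpos fnz; rewrite qf_diag lt_def.
have ge0 j : 0 <= rc (d j) * (f 0 j * (f 0 j)^*).
  by apply: mulr_ge0; [rewrite ler0c ltW | apply: mul_conjC_ge0].
rewrite sumr_ge0 ?andbT //; apply/negP => /eqP /psumr_eq0P H.
apply: (negP fnz); apply/eqP/rowP => j; rewrite mxE.
have /eqP := H (fun i _ => ge0 i) j isT; rewrite mulf_eq0 mul_conjC_eq0.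
case/orP => [|/eqP //]; by rewrite (inj_eq (@complexI R)) gt_eqF.
Qed.

Lemma qf_diag_le (d1 d2 : 'I_n -> R) (f : 'rV[C]_n) : (forall i, d1 i <= d2 i) ->
  qfc (map_mx rc (diag_mx (\row_i d1 i))) f <= qfc (map_mx rc (diag_mx (\row_i d2 i))) f.
Proof.
move=> H; rewrite !qf_diag; apply: ler_sum => j _; apply: ler_wpM2r.
  exact: mul_conjC_ge0.
by rewrite lecR.
Qed.

End Misc.

End Helpers.
Import Helpers.


Theorem corollary2p12 (R : realType) (n : nat)
  (E : {set 'I_n * 'I_n}) (wKV : 'I_n -> R) (wKE : 'I_n * 'I_n -> R)
  (VH : {set 'I_n}) (EH : {set 'I_n * 'I_n})
  (wHV : 'I_n -> R) (wHE : 'I_n * 'I_n -> R)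
  (lam theta : 'I_n -> R) :
  is_edge_set E ->
  nonneg_weights E wKV wKE ->
  subcomplex E VH EH ->
  (forall v, v \in VH -> 0 <= wHV v <= wKV v) ->
  (forall e, e \in EH -> 0 <= wHE e <= wKE e) ->
  let wLV := fun v => wKV v - (if v \in VH then wHV v else 0) in
  let wLE := fun e => wKE e - (if e \in EH then wHE e else 0) in
  (forall e, e \in E -> 0 < wLE e -> 0 < wLV e.1 /\ 0 < wLV e.2) ->
  normalizing E wKV wKE ->
  normalizing E wLV wLE ->
  eigenvalues_sorted (Lup0_mx E wKV wKE) lam ->
  eigenvalues_sorted (Lup0_mx E wLV wLE) theta ->
  forall k : 'I_n,
    ext_eig lam (k.+1%:Z - #|VH|%:Z + (n_components VH EH)%:Z) <= theta k /\
    theta k <= ext_eig lam (k.+1%:Z + #|VH|%:Z).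
Proof.
move=> hE [hKV hKE] [EHE EHV] hHV hHE wLV wLE _ hNK hNL [chK sK] [chL sL] k.
pose rc := real_complex R.
have hLV v : 0 <= wLV v.
  rewrite /wLV; case: ifP => vH; last by rewrite subr0.
  by case/andP: (hHV v vH) => _ h; rewrite subr_ge0.
have hLE e : e \in E -> 0 <= wLE e.
  rewrite /wLE; case: ifP => eH eE; last by rewrite subr0 hKE.
  by case/andP: (hHE e eH) => _ h; rewrite subr_ge0.
have hLKV v : wLV v <= wKV v.
  rewrite /wLV; case: ifP => vH; last by rewrite subr0.
  by case/andP: (hHV v vH) => h _; rewrite lerBlDr lerDl.
pose dK i := if wKV i == 0 then 1 else wKV i.
pose dL i := if wLV i == 0 then dK i else wLV i.
have dKpos i : 0 < dK i.
  rewrite /dK; case: eqP => [_|/eqP nz]; first exact: ltr01.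
  by rewrite lt_def nz hKV.
have dLpos i : 0 < dL i.
  rewrite /dL; case: eqP => [_|/eqP nz]; first exact: dKpos.
  by rewrite lt_def nz hLV.
have dKe i : wKV i != 0 -> dK i = wKV i by rewrite /dK => /negPf ->.
have dLe i : wLV i != 0 -> dL i = wLV i by rewrite /dL => /negPf ->.
have dLK i : dL i <= dK i.
  rewrite /dL; case: eqP => [_|/eqP nz]; first by [].
  have lt0 : 0 < wLV i by rewrite lt_def nz hLV.
  rewrite dKe ?hLKV //; apply: lt0r_neq0; exact: lt_le_trans lt0 (hLKV i).
have dLK_out i : i \notin VH -> dL i = dK i.
  move=> iV; rewrite /dL /wLV (negPf iV) subr0; case: eqP => // /eqP nz.
  by rewrite dKe.
have MK := Lup0_mxE hE (conj hKV hKE) hNK dKe.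
have ML := Lup0_mxE hE (conj hLV hLE) hNL dLe.
rewrite MK in chK; rewrite ML in chL.
have keyK := key (Smx_sym E wKE) dKpos chK.
have keyL := key (Smx_sym E wLE) dLpos chL.
set SK := Smx E wKE in keyK; set SL := Smx E wLE in keyL.
set DK := diag_mx (\row_i dK i) in keyK; set DL := diag_mx (\row_i dL i) in keyL.
have QS_eq (f : 'rV[R[i]]_n) : (forall e, e \in EH -> f 0 e.1 = f 0 e.2) ->
    qfc (map_mx rc SK) f = qfc (map_mx rc SL) f.
  move=> H; rewrite !qf_Smx; apply: eq_bigr => e eE; rewrite /wLE.
  case: ifP => eH; last by rewrite subr0.
  by rewrite (H e eH) subrr mul0r !mulr0.
have Wp (f : 'rV[R[i]]_n) : (f <= @selmx R n (~: VH))%MS ->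
    qfc (map_mx rc DK) f = qfc (map_mx rc DL) f /\
    forall e, e \in EH -> f 0 e.1 = f 0 e.2.
  move=> /submxP [c ->].
  have z v : v \in VH -> (c *m @selmx R n (~: VH)) 0 v = 0.
    by move=> vV; apply: selmx_supp; rewrite inE negbK.
  split.
    rewrite !qf_diag; apply: eq_bigr => j _.
    case: (boolP (j \in VH)) => jV; first by rewrite z // mul0r !mulr0.
    by rewrite dLK_out.
  move=> e eH; have /andP [e1 e2] := EHV e eH; by rewrite !z.
have QSL0 f : 0 <= qfc (map_mx rc SL) f by apply: qf_S_ge0.
have QSL2 f : qfc (map_mx rc SL) f <= 2 * qfc (map_mx rc DL) f.
  exact: (qf_S_le2 _ hE (conj hLV hLE) hNL dLpos dLe).
have th0 (i : 'I_n) : 0 <= theta i.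
  have [[m [U [rU HU]]] _] := keyL (theta i).
  have [f [fnz fU]] := exists_nz (leq_ltn_trans (leq0n _) (leq_trans (cnt_le sL i) rU)).
  have := le_trans (QSL0 f) (HU f fU).
  by rewrite pmulr_lge0 ?qf_diag_gt0 // ler0c.
have th2 (i : 'I_n) : theta i <= 2.
  have [_ [m [V [rV HV]]]] := keyL (theta i).
  have pos : (0 < n - i)%N by rewrite subn_gt0.
  have [f [fnz fV]] := exists_nz (leq_trans pos (leq_trans (cnt_ge sL i) rV)).
  have := le_trans (HV f fV) (QSL2 f).
  have -> : 2 = rc 2 by rewrite /rc rmorph_nat.
  by rewrite ler_pM2r ?qf_diag_gt0 // lecR.
have hVn : (#|VH| <= n)%N by rewrite -[X in (_ <= X)%N]card_ord max_card.
have hcV := comps_le VH EH.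
have cardCV : #|~: VH| = (n - #|VH|)%N.
  have := cardsC VH; rewrite card_ord => H; lia.
split.
  case: (leqP #|VH| (k + n_components VH EH)) => hc; last first.
    rewrite ext_eig_le0 ?th0 //; lia.
  set c := n_components VH EH in hc hcV *.
  have jn : (k + c - #|VH| < n)%N by have := ltn_ord k; lia.
  have -> : (k.+1%:Z - #|VH|%:Z + c%:Z)%R = ((k + c - #|VH|).+1)%:Z by lia.
  rewrite (ext_eig_in lam jn); set t := lam (Ordinal jn).
  have [_ [m1 [V [rV HV]]]] := keyK t.
  have [[m2 [U [rU HU]]] _] := keyL (theta k).
  have rVt := leq_trans (cnt_ge sK (Ordinal jn)) rV.
  have rUt := leq_trans (cnt_le sL k) rU.
  have rW : ((n - #|VH|) + c <= \rank (Bmx R VH EH))%N.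
    by rewrite /c -card_blocks; apply: Bmx_rank.
  have [f [fnz fV fU fW]] : exists f : 'rV[R[i]]_n,
      [/\ f != 0, (f <= V)%MS, (f <= U)%MS & (f <= Bmx R VH EH)%MS].
    apply: three_cap; move: rVt rUt rW (ltn_ord k) hVn hc hcV; rewrite /= -/c; lia.
  have e1 := HV f fV; have e2 := HU f fU.
  rewrite (QS_eq f (Bmx_edge EHV fW)) in e1.
  have e3 : rc (theta k) * qfc (map_mx rc DL) f <= rc (theta k) * qfc (map_mx rc DK) f.
    by apply: ler_wpM2l; [rewrite ler0c | apply: qf_diag_le].
  have := le_trans e1 (le_trans e2 e3).
  by rewrite ler_pM2r ?qf_diag_gt0 // lecR.
case: (ltnP (k + #|VH|) n) => hk; last first.
  have -> : (k.+1%:Z + #|VH|%:Z)%R = ((k + #|VH|).+1)%:Z by lia.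
  by rewrite ext_eig_out.
have -> : (k.+1%:Z + #|VH|%:Z)%R = ((k + #|VH|).+1)%:Z by lia.
rewrite (ext_eig_in lam hk); set t := lam (Ordinal hk).
have [[m1 [U [rU HU]]] _] := keyK t.
have [_ [m2 [V [rV HV]]]] := keyL (theta k).
have rUt := leq_trans (cnt_le sK (Ordinal hk)) rU.
have rVt := leq_trans (cnt_ge sL k) rV.
have rW : (n - #|VH| <= \rank (@selmx R n (~: VH)))%N.
  by rewrite -cardCV; apply: selmx_rank.
have [f [fnz fU fW fV]] : exists f : 'rV[R[i]]_n,
    [/\ f != 0, (f <= U)%MS, (f <= @selmx R n (~: VH))%MS & (f <= V)%MS].
  have hk' := hk; apply: three_cap; move: rVt rUt rW (ltn_ord k) hVn hk'; rewrite /=; lia.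
have [eD eE] := Wp f fW.
have e1 := HU f fU; have e2 := HV f fV.
rewrite (QS_eq f eE) eD in e1.
have := le_trans e2 e1.
by rewrite ler_pM2r ?qf_diag_gt0 // lecR.
Qed.
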